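(* Suppose an ordered linear probing hash table with $n$ slots initially contains $(1-\epsilon)n$ keys (inserted into an empty table, with fully random hashes) and no tombstones. Let $c$ be a sufficiently large constant. Then for any interval $P\subseteq[n]$ with $|P|\ge c\,\epsilon^{-2}\log\epsilon^{-1}$, with probability $1-1/\mathrm{poly}(|P|)$ the interval $P$ contains $\Omega(\epsilon|P|)$ free slots.
   Context: Ordered linear probing: slots $1,\dots,n$; an inserted key $u$ is placed in the run starting at or covering $h(u)$ so that keys in each maximal run of occupied slots are stored in order of hash, shifting later keys right to the first free slot. $h$ is uniform and fully independent. ''With probability $1-1/\mathrm{poly}(j)$'' means for every constant $c'>0$, probability $1-O(j^{-c'})$. *)

(* Defs.v *)
From HB Require Import structures.
From mathcomp Require Import all_boot all_order all_algebra.
From mathcomp Require Import reals exp.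
Set Implicit Arguments. Unset Strict Implicit. Unset Printing Implicit Defensive.
Import Order.TTheory GRing.Theory Num.Theory.

(* Ordered linear probing, circular table with slots 0..n-1 (paper's 1..n),
   keys are the naturals 0..m-1, h k < n is the hash of key k.
   A table is a seq of length n of [option key] ([None] = free slot). *)

Section OLP.
Variables (n : nat) (h : nat -> nat).

Definition slot_at (tab : seq (option nat)) (i : nat) : option nat :=
  nth None tab (i %% n).

(* offset (0 <= k < n) of the first free slot at or after i; n if none *)
Definition off_free (tab : seq (option nat)) (i : nat) : nat :=
  find (fun k => slot_at tab (i + k) == None) (iota 0 n).

Definition off_back (tab : seq (option nat)) (i : nat) : nat :=
  find (fun k => slot_at tab (i + n - k.+1) == None) (iota 0 n).

(* Insert key u: the keys of the run starting at or covering h u, together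
   with u, are laid out in order of hash (relative to the run start s),
   occupying the run and the first free slot after it (i.e. later keys are
   shifted right to the first free slot). *)
Definition olp_insert (tab : seq (option nat)) (u : nat) : seq (option nat) :=
  let hu := h u in
  let f := off_free tab hu in
  if n <= f then tab else
  let b := if slot_at tab hu == None then 0 else off_back tab hu in
  let s := (hu + n - b) %% n in
  let L := b + f in (* number of keys already in the run segment [s, s+L) *)
  let old := pmap id [seq slot_at tab (s + j) | j <- iota 0 L] in
  let dist k := (h k + n - s) %% n in
  let sorted_keys := sort (fun x y => dist x <= dist y) (old ++ [:: u]) in
  mkseq (fun i => let j := (i + n - s) %% n in
                  if j <= L then Some (nth 0 sorted_keys j) else nth None tab i) n.

Definition olp_build (m : nat) : seq (option nat) :=
  foldl olp_insert (nseq n None) (iota 0 m).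

Definition free_in (tab : seq (option nat)) (a len : nat) : nat :=
  count (fun i => nth None tab i == None) (iota a len).

End OLP.

Definition hashfun (n m : nat) (f : {ffun 'I_m -> 'I_n}) (k : nat) : nat :=
  if insub k is Some i then val (f i) else 0.

(* Probability of an event over uniform, fully independent hashes. *)
Definition prob_hash (R : realType) (n m : nat)
  (E : (nat -> nat) -> bool) : R :=
  (#|[set f : {ffun 'I_m -> 'I_n} | E (hashfun f)]|%:R / (n ^ m)%:R)%R.

(* Main.v *)
Require Import Defs.
From HB Require Import structures.
From mathcomp Require Import all_boot all_order all_algebra.
From mathcomp Require Import reals exp.
From mathcomp Require Import zify sequences ring lra.
Import Order.TTheory GRing.Theory Num.Theory.

Set Implicit Arguments. Unset Strict Implicit. Unset Printing Implicit Defensive.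

Section Comb.
Variables (n : nat) (h : nat -> nat).
Hypothesis n_gt0 : (0 < n)%N.

Lemma mod_shift s i : (s < n)%N -> (i < n)%N -> (s + (i + n - s) %% n) %% n = i.
Proof.
move=> Hs Hi; rewrite modnDmr.
have -> : (s + (i + n - s) = i + n)%N by lia.
by rewrite modnDr modn_small.
Qed.

Lemma mod_inj s j k : (j < n)%N -> (k < n)%N -> (s + j) %% n = (s + k) %% n -> j = k.
Proof.
move=> Hj Hk /eqP; rewrite eqn_modDl => /eqP; rewrite !modn_small //.
Qed.

Lemma slot_mod tab i : slot_at n tab (i %% n) = slot_at n tab i.
Proof. by rewrite /slot_at modn_mod. Qed.

Lemma slot_small tab i : (i < n)%N -> slot_at n tab i = nth None tab i.
Proof. by move=> Hi; rewrite /slot_at modn_small. Qed.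

Lemma off_free_lt tab hu : (exists i, (i < n)%N /\ slot_at n tab i == None) ->
  (off_free n tab hu < n)%N.
Proof.
move=> [i [Hi Hf]].
have := find_size (fun k => slot_at n tab (hu + k) == None) (iota 0 n).
rewrite size_iota /off_free leq_eqVlt => /orP [/eqP E|//].
exfalso.
have : ~~ has (fun k => slot_at n tab (hu + k) == None) (iota 0 n).
  by rewrite has_find size_iota E ltnn.
move/hasPn => /(_ ((i + n - hu %% n) %% n)).
rewrite mem_iota add0n ltn_mod n_gt0 => /(_ isT).
rewrite -slot_mod -modnDml mod_shift ?ltn_mod // Hf.
by [].
Qed.

Lemma off_free_spec tab hu : (off_free n tab hu < n)%N ->
  slot_at n tab (hu + off_free n tab hu) == None /\
  forall k, (k < off_free n tab hu)%N -> slot_at n tab (hu + k) != None.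
Proof.
move=> H; split.
  have := nth_find 0 (a:=(fun k => slot_at n tab (hu + k) == None)) (s:=iota 0 n).
  rewrite has_find size_iota => /(_ H).
  by rewrite nth_iota // add0n.
move=> k Hk.
have := before_find 0 (a:=(fun k => slot_at n tab (hu + k) == None)) (s:=iota 0 n) Hk.
by rewrite nth_iota ?add0n // => [->|]; [|apply: ltn_trans H].
Qed.

Lemma off_back_spec tab a :
  (off_back n tab a <= n)%N /\
  forall k, (k < off_back n tab a)%N -> slot_at n tab (a + n - k.+1) != None.
Proof.
split; first by rewrite /off_back; have := find_size (fun k => slot_at n tab (a + n - k.+1) == None) (iota 0 n); rewrite size_iota.
move=> k Hk.
have := before_find 0 (a:=(fun k => slot_at n tab (a + n - k.+1) == None)) (s:=iota 0 n) Hk.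
rewrite nth_iota ?add0n // => [->//|].
apply: leq_trans Hk _.
by have := find_size (fun k => slot_at n tab (a + n - k.+1) == None) (iota 0 n); rewrite size_iota.
Qed.

Lemma off_back_lt tab a : (off_back n tab a < n)%N ->
  slot_at n tab (a + n - (off_back n tab a).+1) == None.
Proof.
move=> H.
have := nth_find 0 (a:=(fun k => slot_at n tab (a + n - k.+1) == None)) (s:=iota 0 n).
rewrite has_find size_iota => /(_ H).
by rewrite nth_iota // add0n.
Qed.


Lemma insert_occ tab u : size tab = n -> (h u < n)%N ->
  (exists i, (i < n)%N /\ slot_at n tab i == None) ->
  size (olp_insert n h tab u) = n /\
  forall i, (i < n)%N -> (nth None (olp_insert n h tab u) i != None) =
     (nth None tab i != None) || (i == (h u + off_free n tab (h u)) %% n).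
Proof.
move=> Hsz Hu Hex.
have Hf := off_free_lt (h u) Hex.
have [Hfree Hocc] := off_free_spec Hf.
rewrite /olp_insert.
set f := off_free n tab (h u) in Hf Hfree Hocc *.
rewrite leqNgt Hf /=.
set b := (if slot_at n tab (h u) == None then 0 else off_back n tab (h u)).
have [Hbn Hb] : (b <= n)%N /\ forall d, (d < b)%N -> slot_at n tab (h u + n - d.+1) != None.
  rewrite /b; case: ifP => _; last exact: off_back_spec.
  by split.
have HL : (b + f < n)%N.
  rewrite ltnNge; apply/negP => Hge.
  have := Hb (n - f).-1; rewrite prednK ?subn_gt0 // => /(_ ltac:(lia)).
  have -> : (h u + n - (n - f) = h u + f)%N by lia.
  by rewrite Hfree.
set s := ((h u + n - b) %% n)%N.
have Hs : (s < n)%N by rewrite ltn_mod.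
split; first by rewrite size_mkseq.
move=> i Hi; rewrite nth_mkseq //=.
set j := ((i + n - s) %% n)%N.
have Hj : (j < n)%N by rewrite ltn_mod.
have Hsj : (s + j) %% n = i by rewrite mod_shift.
have Hsj' : ((h u + n - b) + j) %% n = i by rewrite -modnDml.
case: (ltngtP j (b + f)) => Hjl.
- have -> : nth None tab i != None.
    rewrite -slot_small // -Hsj'.
    case: (ltnP j b) => Hjb.
      have := Hb (b - j.+1) ltac:(lia).
      have -> : (h u + n - (b - j.+1).+1 = h u + n - b + j)%N by lia.
      by rewrite slot_mod.
    have := Hocc (j - b) ltac:(lia).
    have -> : (h u + n - b + j = (h u + (j - b)) + n)%N by lia.
    by rewrite modnDr slot_mod.
  by [].
- case E: (i == (h u + f) %% n); rewrite ?orbF //; exfalso; move/eqP: E => Eq.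
  have : (s + (b + f)) %% n = (s + j) %% n.
    rewrite Hsj Eq /s modnDml.
    have -> : (h u + n - b + (b + f) = h u + f + n)%N by lia.
    by rewrite modnDr.
  move/(mod_inj HL Hj) => E; lia.
- apply/esym/orP; right; apply/eqP.
  rewrite -Hsj' Hjl.
  have -> : (h u + n - b + (b + f) = h u + f + n)%N by lia.
  by rewrite modnDr.
Qed.


Definition cnt tab s l := count (fun k => slot_at n tab (s + k) != None) (iota 0 l).
Definition Hc s l M := count (fun k => ((h k + n - s) %% n < l)%N) (iota 0 M).

Lemma occ_insert tab u : size tab = n -> (h u < n)%N ->
  (exists i, (i < n)%N /\ slot_at n tab i == None) ->
  forall i, (slot_at n (olp_insert n h tab u) i != None) =
     (slot_at n tab i != None) || (i %% n == (h u + off_free n tab (h u)) %% n).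
Proof.
move=> Hsz Hu Hex i.
have [_ H] := insert_occ Hsz Hu Hex.
by rewrite /slot_at H // ltn_mod.
Qed.

Lemma count_mod_eq q l : (q < n)%N -> (l <= n)%N -> forall s, (s < n)%N ->
  count (fun k => (s + k) %% n == q) (iota 0 l) = ((q + n - s) %% n < l)%N.
Proof.
move=> Hq Hl s Hs.
have -> : (((q + n - s) %% n) < l)%N = ((q + n - s) %% n \in iota 0 l) by rewrite mem_iota add0n.
rewrite -(count_uniq_mem ((q + n - s) %% n) (iota_uniq 0 l)).
apply: eq_in_count => k; rewrite mem_iota add0n /= => Hk.
apply/eqP/eqP => [E|->]; last by rewrite mod_shift.
apply: (@mod_inj s); rewrite ?ltn_mod //; first lia.
by rewrite E mod_shift.
Qed.

Lemma build_succ M : olp_build n h M.+1 = olp_insert n h (olp_build n h M) M.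
Proof. by rewrite /olp_build -addn1 iotaD foldl_cat. Qed.

Definition olp_inv tab M :=
  [/\ size tab = n,
      count (fun i => slot_at n tab i != None) (iota 0 n) = M &
      forall s l, (s < n)%N -> (l <= n)%N -> slot_at n tab (s + n - 1) == None ->
        (cnt tab s l <= Hc s l M)%N].

Lemma build_inv M : (M <= n)%N -> (forall k, (k < M)%N -> (h k < n)%N) ->
  olp_inv (olp_build n h M) M.
Proof.
elim: M => [_ _|M IH HM Hh].
  rewrite /olp_build /=; split; first by rewrite size_nseq.
    apply/eqP; rewrite -leqn0 leqNgt -has_count; apply/hasPn => i _.
    by rewrite /slot_at nth_nseq if_same eqxx.
  move=> s l _ _ _; rewrite /cnt.
  have -> : count (fun k => slot_at n (nseq n None) (s + k) != None) (iota 0 l) = 0%N.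
    apply/eqP; rewrite -leqn0 leqNgt -has_count; apply/hasPn => i _.
    by rewrite /slot_at nth_nseq if_same eqxx.
  by [].
have [Hsz Hcnt Hinv] := IH (ltnW HM) (fun k Hk => Hh k (ltnW Hk)).
set T := olp_build n h M in Hsz Hcnt Hinv *.
have Hu : (h M < n)%N by apply: Hh.
have Hex : exists i, (i < n)%N /\ slot_at n T i == None.
  have : ~~ all (fun i => slot_at n T i != None) (iota 0 n).
    by rewrite all_count Hcnt size_iota neq_ltn HM.
  case/allPn => i; rewrite mem_iota add0n => Hi; rewrite negbK => Hf.
  by exists i.
have Hf := off_free_lt (h M) Hex.
have [Hfree Hocc] := off_free_spec Hf.
set f := off_free n T (h M) in Hf Hfree Hocc.
set q := ((h M + f) %% n)%N.
have Hq : (q < n)%N by rewrite ltn_mod.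
have Hqf : slot_at n T q = None by apply/eqP; rewrite slot_mod.
have HO := occ_insert Hsz Hu Hex.
rewrite -/f -/q in HO.
rewrite build_succ -/T; split.
- by have [-> _] := insert_occ Hsz Hu Hex.
- under eq_count => i do rewrite HO.
  have := count_predUI (fun i => slot_at n T i != None) (fun i => i %% n == q) (iota 0 n).
  rewrite /predU /predI /= Hcnt.
  have -> : count (fun i => (slot_at n T i != None) && (i %% n == q)) (iota 0 n) = 0%N.
    apply/eqP; rewrite -leqn0 leqNgt -has_count; apply/hasPn => i _.
    apply/negP => /andP [H1 /eqP H2]; move: H1; rewrite -slot_mod H2 Hqf.
    by [].
  have -> : count (fun i => i %% n == q) (iota 0 n) = 1%N.
    have := count_mod_eq Hq (leqnn n) n_gt0.
    rewrite subn0 modnDr modn_small // Hq => E.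
    rewrite -[RHS]/(nat_of_bool true) -E.
    by apply: eq_count => k; rewrite add0n.
  by rewrite addn0 addn1.
- move=> s l Hs Hl Hsfree.
  have Hsfree' : slot_at n T (s + n - 1) == None.
    apply/negPn; move: Hsfree; apply: contraL => H; by rewrite HO H.
  have := Hinv s l Hs Hl Hsfree'.
  rewrite /cnt /Hc -addn1 iotaD count_cat /= add0n addn0.
  move=> Hold.
  under eq_count => k do rewrite HO.
  set dh := ((h M + n - s) %% n)%N.
  have Hle := count_predUI (fun k => slot_at n T (s + k) != None) (fun k => (s + k) %% n == q) (iota 0 l).
  rewrite /predU /predI /= in Hle.
  rewrite count_mod_eq // in Hle.
  have Hdq : (((q + n - s) %% n) < l)%N -> (dh < l)%N.
    move=> Hql.
    case: (leqP dh ((q + n - s) %% n)) => Hcmp; first exact: leq_ltn_trans Hcmp Hql.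
    exfalso.
    set dq := ((q + n - s) %% n)%N in Hql Hcmp.
    have Hdq : (dq < n)%N by rewrite ltn_mod.
    have Hdh : (dh < n)%N by rewrite ltn_mod.
    have E1 : (s + dh) %% n = h M by rewrite mod_shift.
    have E2 : (s + dq) %% n = q by rewrite mod_shift.
    have E3 : (s + dq) %% n = (s + (dh + f)) %% n.
      by rewrite E2 /q addnA -[in RHS]modnDml E1.
    case: (ltnP (dh + f) n) => Hdf.
      have E := mod_inj Hdq Hdf E3.
      by move: Hcmp; rewrite E ltnNge leq_addr.
    have := Hocc (n - dh.+1) ltac:(clear -Hdf Hdh; lia).
    rewrite -slot_mod -E1 modnDml.
    have -> : (s + dh + (n - dh.+1) = s + n - 1)%N by clear -Hdh; lia.
    by rewrite slot_mod Hsfree'.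
  apply: (leq_trans (n := (cnt T s l + ((q + n - s) %% n < l))%N)).
    by rewrite /cnt -Hle; exact: leq_addr.
  apply: leq_add; first exact: Hold.
  by case: ((q + n - s) %% n < l)%N Hdq => // ->.
Qed.


Lemma mod2 x : (x < n + n)%N -> x %% n = (if (x < n)%N then x else x - n).
Proof.
move=> H2; case: (ltnP x n) => H1; first by rewrite modn_small.
rewrite -{1}(subnK H1) modnDr modn_small //; lia.
Qed.

Lemma Hc_full s M : Hc s n M = M.
Proof.
rewrite /Hc (eq_count (a2 := predT)); first by rewrite count_predT size_iota.
by move=> k; rewrite /= ltn_mod n_gt0.
Qed.

Lemma link T M a L : olp_inv T M -> (M < n)%N -> (0 < L)%N -> (a + L <= n)%N ->
  exists j, (j < n)%N /\
   ( ((j + L < n)%N /\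
      (j + L <= Hc ((a + n - j) %% n) (j + L) M + free_in T a L)%N)
     \/ (n <= M + free_in T a L)%N ).
Proof.
move=> [Hsz Hcnt Hinv] HM HL HaL.
have Ha : (a < n)%N by lia.
have [i [Hi Hif]] : exists i, (i < n)%N /\ slot_at n T i == None.
  have : ~~ all (fun i => slot_at n T i != None) (iota 0 n).
    by rewrite all_count Hcnt size_iota neq_ltn HM.
  case/allPn => i; rewrite mem_iota add0n => Hi; rewrite negbK => Hf.
  by exists i.
have [Hjn Hjocc] := off_back_spec T a.
set j := off_back n T a in Hjn Hjocc.
have Hj : (j < n)%N.
  rewrite ltn_neqAle Hjn andbT; apply/negP => /eqP Ej.
  set k := ((a + n - i.+1) %% n)%N.
  have Hk : (k < n)%N by rewrite ltn_mod.
  have := Hjocc k; rewrite Ej => /(_ Hk).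
  rewrite -slot_mod.
  have -> : (a + n - k.+1) %% n = i.
    have Hx2 : (a + n - i.+1 < n + n)%N by clear -Hi Ha; lia.
    rewrite /k (mod2 Hx2).
    case: (ltnP (a + n - i.+1) n) => Hx.
      by rewrite modn_small; clear -Hi Ha Hx; lia.
    have -> : (a + n - (a + n - i.+1 - n).+1 = i + n)%N by clear -Hi Ha Hx; lia.
    by rewrite modnDr modn_small.
  by rewrite Hif.
exists j; split => //.
have Hjf := off_back_lt Hj.
set s := ((a + n - j) %% n)%N.
have Hs : (s < n)%N by rewrite ltn_mod.
have Hsf : slot_at n T (s + n - 1) == None.
  rewrite -slot_mod.
  have -> : (s + n - 1 = s + (n - 1))%N by clear -n_gt0; lia.
  rewrite modnDml.
  have -> : (a + n - j + (n - 1) = (a + n - j.+1) + n)%N by clear -Hj n_gt0; lia.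
  by rewrite modnDr slot_mod.
set l := minn (j + L) n.
have Hl : (l <= n)%N by rewrite geq_minr.
have Hlj : (j <= l)%N by rewrite leq_min Hjn leq_addr.
have HlL : (l - j <= L)%N by rewrite leq_subLR geq_minl.
have Hmain := Hinv s l Hs Hl Hsf.
have Hcnt2 : (l <= cnt T s l + free_in T a L)%N.
  rewrite /cnt -(subnKC Hlj) iotaD count_cat.
  have -> : count (fun k => slot_at n T (s + k) != None) (iota 0 j) = j.
    suff : all (fun k => slot_at n T (s + k) != None) (iota 0 j).
      by rewrite all_count size_iota => /eqP.
    apply/allP => k.
    rewrite mem_iota add0n => Hk.
    suff -> : slot_at n T (s + k) = slot_at n T (a + n - (j - k.+1).+1).
      by apply: Hjocc; clear -Hk; lia.
    rewrite -[LHS]slot_mod -[RHS]slot_mod /s modnDml.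
    have -> : (a + n - (j - k.+1).+1 = a + n - j + k)%N by clear -Hk Hj; lia.
    by [].
  rewrite add0n -[X in iota X]addn0 iotaDl count_map.
  have -> : count (preim (addn j) (fun k => slot_at n T (s + k) != None)) (iota 0 (l - j))
      = count (fun i => nth None T i != None) (iota a (l - j)).
    rewrite -[a]addn0 iotaDl count_map; apply: eq_in_count => k.
    rewrite mem_iota add0n /= => Hk.
    rewrite -slot_small; last by clear -Hk HlL HaL; lia.
    rewrite -[slot_at n T (s + _)]slot_mod /s modnDml addnA.
    have -> : (a + n - j + j + k = (a + k) + n)%N by clear -Hj; lia.
    by rewrite modnDr slot_mod.
  rewrite /free_in -(subnKC HlL) iotaD count_cat.
  have := count_predC (fun i => nth None T i != None) (iota a (l - j)).
  rewrite size_iota.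
  have -> : count (predC (fun i => nth None T i != None)) (iota a (l - j)) =
            count (fun i => nth None T i == None) (iota a (l - j)).
    by apply: eq_count => x; rewrite /= negbK.
  move=> E; rewrite -addnA leq_add2l addnA E; exact: leq_addr.
case: (ltnP (j + L) n) => HjL.
  left; split => //.
  have El : l = (j + L)%N by rewrite /l; apply/minn_idPl; apply: ltnW.
  rewrite El in Hmain Hcnt2.
  apply: leq_trans Hcnt2 _; exact: leq_add Hmain (leqnn _).
right.
have El : l = n by rewrite /l; apply/minn_idPr.
rewrite El Hc_full in Hmain Hcnt2.
apply: leq_trans Hcnt2 _; exact: leq_add Hmain (leqnn _).
Qed.

End Comb.

Unset Implicit Arguments.

Section Glue.
Variables (n m : nat).
Hypothesis Hn : (0 < n)%N.

Lemma hashfun_lt (f : {ffun 'I_m -> 'I_n}) k : (hashfun f k < n)%N.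
Proof. by rewrite /hashfun; case: insub => // i; exact: ltn_ord. Qed.

Lemma hashfun_val (f : {ffun 'I_m -> 'I_n}) (i : 'I_m) : hashfun f i = f i.
Proof.
rewrite /hashfun; case: insubP => [i' _ E|]; first by rewrite (val_inj E).
by rewrite ltn_ord.
Qed.

Lemma Hc_sum (f : {ffun 'I_m -> 'I_n}) s l :
  Hc n (hashfun f) s l m = (\sum_(i < m) (f i \in [set y : 'I_n | ((y + n - s) %% n < l)%N]))%N.
Proof.
rewrite /Hc -sum1_count.
rewrite (_ : iota 0 m = index_iota 0 m); last by rewrite /index_iota subn0.
rewrite big_mkord big_mkcond; apply: eq_bigr => i _.
by rewrite inE hashfun_val; case: ifP.
Qed.

Lemma card_S s l : (s < n)%N -> (#|[set y : 'I_n | ((y + n - s) %% n < l)%N]| <= l)%N.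
Proof.
move=> Hs.
set p := fun x : nat => ((x + n - s) %% n < l)%N.
have -> : #|[set y : 'I_n | ((y + n - s) %% n < l)%N]| = count p (iota 0 n).
  rewrite -sum1_card -sum1_count (_ : iota 0 n = index_iota 0 n); last by rewrite /index_iota subn0.
  rewrite big_mkord; apply: eq_bigl => y; by rewrite inE.
rewrite -size_filter.
set g := fun x : nat => ((x + n - s) %% n)%N.
have Hinj : {in filter p (iota 0 n) &, injective g}.
  move=> x y; rewrite !mem_filter !mem_iota => /andP [_ /andP [_ Hx]] /andP [_ /andP [_ Hy]] E.
  rewrite add0n in Hx Hy.
  rewrite -(mod_shift Hn Hs Hx) -(mod_shift Hn Hs Hy).
  by rewrite /g in E; rewrite E.
rewrite -(size_map g) -(size_iota 0 l).
apply: uniq_leq_size.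
  by rewrite map_inj_in_uniq // filter_uniq // iota_uniq.
move=> z /mapP [x]; rewrite mem_filter => /andP [Hp _] ->.
by rewrite mem_iota add0n.
Qed.

End Glue.


Section ChernWrap.
Local Open Scope ring_scope.
Section Chern.
Variable R : realType.

Lemma expR_sum (I : finType) (F : I -> R) : expR (\sum_i F i) = \prod_i expR (F i).
Proof. exact: (big_morph (@expR R) (@expRD R) (@expR0 R)). Qed.

Lemma chernoff (n m : nat) (S : {set 'I_n}) (th t : R) : 0 <= th ->
  #|[set f : {ffun 'I_m -> 'I_n} | t <= ((\sum_(i < m) (f i \in S))%N)%:R]|%:R * expR (th * t)
  <= (n%:R + #|S|%:R * (expR th - 1)) ^+ m.
Proof.
move=> Hth.
set A := [set f : {ffun 'I_m -> 'I_n} | _].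
rewrite mulr_natl -sumr_const.
apply: (@le_trans _ _ (\sum_(f in A) expR (th * ((\sum_(i < m) (f i \in S))%N)%:R))).
  apply: ler_sum => f; rewrite inE => Hf.
  by rewrite ler_expR ler_wpM2l.
apply: (@le_trans _ _ (\sum_(f : {ffun 'I_m -> 'I_n}) expR (th * ((\sum_(i < m) (f i \in S))%N)%:R))).
  rewrite [X in _ <= X](bigID (fun f => f \in A)) /= lerDl.
  by apply: sumr_ge0 => f _; exact: expR_ge0.
under eq_bigr => f _.
  rewrite natr_sum.
  rewrite mulr_sumr.
  rewrite (big_morph (@expR R) (@expRD R) (@expR0 R)).
  over.
have -> : \sum_(f : {ffun 'I_m -> 'I_n}) \prod_(i < m) expR (th * (f i \in S)%:R) =
   \prod_(i < m) \sum_(y : 'I_n) expR (th * (y \in S)%:R).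
  by rewrite bigA_distr_bigA.
rewrite prodr_const card_ord.
apply: lerXn2r.
- by rewrite qualifE /=; apply: sumr_ge0 => y _; exact: expR_ge0.
- rewrite qualifE /=; apply: addr_ge0; first exact: ler0n.
  apply: mulr_ge0; first exact: ler0n.
  rewrite subr_ge0; apply: le_trans (expR_ge1Dx th); by rewrite lerDl.
rewrite /=.
have E : forall y : 'I_n, expR (th * (y \in S)%:R) = 1 + (y \in S)%:R * (expR th - 1).
  by move=> y; case: (y \in S); rewrite /= ?mulr1 ?mulr0 ?expR0 ?mul0r ?addr0 ?mul1r // addrC subrK.

rewrite (eq_bigr _ (fun y _ => E y)).
rewrite big_split /= sumr_const card_ord -mulr_suml.
have -> : \sum_(i : 'I_n) (i \in S)%:R = #|S|%:R :> R.
  rewrite -sum1_card natr_sum [RHS]big_mkcond; apply: eq_bigr => i _; by case: (i \in S).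
by [].
Qed.


Lemma tail_bound (n m : nat) (S : {set 'I_n}) (l : nat) (th t : R) :
  (0 < n)%N -> 0 <= th -> (#|S| <= l)%N ->
  #|[set f : {ffun 'I_m -> 'I_n} | t <= ((\sum_(i < m) (f i \in S))%N)%:R]|%:R
  <= (n ^ m)%:R * expR (m%:R / n%:R * l%:R * (expR th - 1) - th * t).
Proof.
move=> Hn Hth HS.
have He1 : 0 <= expR th - 1.
  rewrite subr_ge0; apply: le_trans (expR_ge1Dx th); by rewrite lerDl.
have Hn0 : 0 < n%:R :> R by rewrite ltr0n.
have := chernoff n m S th t Hth.
set B := (X in X * _ <= _).
move=> H.
have H2 : B * expR (th * t) <= (n%:R * expR (l%:R / n%:R * (expR th - 1))) ^+ m.
  apply: le_trans H _.
  apply: lerXn2r.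
  - rewrite qualifE /=; apply: addr_ge0; first exact: ler0n.
    by apply: mulr_ge0; first exact: ler0n.
  - by rewrite qualifE /=; apply: mulr_ge0; [exact: ler0n|exact: expR_ge0].
  rewrite /=.
  apply: (@le_trans _ _ (n%:R + l%:R * (expR th - 1))).
    by rewrite lerD2l ler_wpM2r // ler_nat.
  have -> : n%:R + l%:R * (expR th - 1) = n%:R * (1 + l%:R / n%:R * (expR th - 1)).
    by field; rewrite gt_eqF.
  by rewrite ler_wpM2l ?ler0n // expR_ge1Dx.
rewrite exprMn -expRM_natl -natrX in H2.
rewrite expRD expRN.
have -> : m%:R / n%:R * l%:R * (expR th - 1) = m%:R * (l%:R / n%:R * (expR th - 1)) by ring.
rewrite mulrA ler_pdivlMr ?expR_gt0 //.
Qed.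

Lemma exp_small (th : R) : 0 <= th -> th <= 1/2 -> expR th - 1 <= th + 2 * th ^+ 2.
Proof.
move=> H0 H1.
have E : 0 < expR th := expR_gt0 th.
have E1 : 1 <= expR th by apply: le_trans (expR_ge1Dx th); rewrite lerDl.
have H : 1 - th <= (expR th)^-1 by rewrite -expRN; apply: le_trans (expR_ge1Dx (- th)); rewrite addrC.
have H' : (1 - th) * expR th <= 1.
  by rewrite -[X in _ <= X](mulVf (lt0r_neq0 E)); apply: ler_wpM2r => //; exact: ltW.
nra.
Qed.


Lemma exponent_bound (eps l : R) : 0 <= eps -> eps <= 1 -> 0 <= l ->
  (1 - eps) * l * (expR (eps / 8) - 1) - eps / 8 * ((1 - eps / 2) * l)
  <= - (eps ^+ 2 / 32) * l.
Proof.
move=> H0 H1 Hl.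
have Hth := exp_small (eps / 8) ltac:(lra) ltac:(lra).
have H2 : (1 - eps) * l * (expR (eps / 8) - 1) <= (1 - eps) * l * (eps / 8 + 2 * (eps / 8) ^+ 2).
  by apply: ler_wpM2l => //; apply: mulr_ge0 => //; lra.
apply: le_trans (lerD H2 (lexx _)) _.
have -> : (1 - eps) * l * (eps / 8 + 2 * (eps / 8) ^+ 2) - eps / 8 * ((1 - eps / 2) * l)
   = - (eps ^+ 2 / 32) * l - eps ^+ 3 / 32 * l by field.
rewrite lerBlDr lerDl.
by apply: mulr_ge0 => //; apply: divr_ge0 => //; apply: exprn_ge0.
Qed.

Lemma geom_bound (x L : R) (n : nat) : 0 < x -> x <= 1 ->
  \sum_(j < n) expR (- x * (j%:R + L)) <= 2 / x * expR (- x * L).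
Proof.
move=> Hx Hx1.
set r := expR (- x).
have Hr : 0 < r := expR_gt0 _.
have Hrx : r * (1 + x) <= 1.
  have : r * expR x = 1 by rewrite /r -expRD addNr expR0.
  move=> E; rewrite -[X in _ <= X]E; apply: ler_wpM2l; [exact: ltW|exact: expR_ge1Dx].
have Hr2 : r <= 1 - x / 2 by nra.
have E : forall j : 'I_n, expR (- x * (j%:R + L)) = r ^+ j * expR (- x * L).
  by move=> j; rewrite /r -expRM_natl -expRD; congr expR; ring.
rewrite (eq_bigr _ (fun j _ => E j)).
rewrite -mulr_suml; apply: ler_wpM2r; first exact: expR_ge0.
set S := \sum_(i < n) r ^+ i.
have HS0 : 0 <= S by apply: sumr_ge0 => i _; apply: exprn_ge0; exact: ltW.
have HS : S * (1 - r) <= 1.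
  have E2 := subrX1 r n.
  have -> : S * (1 - r) = 1 - r ^+ n.
    by rewrite /S mulrC -opprB mulNr -E2 opprB.
  by rewrite lerBlDr lerDl exprn_ge0 // ltW.
have Hx2 : 0 < x / 2 by lra.
rewrite ler_pdivlMr //.
nra.
Qed.


Lemma poly_exp (y : R) (c' : nat) : 0 <= y ->
  y ^+ c' * expR (- (y / 64)) <= (64 * (c'.+1)%:R) ^+ c'.
Proof.
move=> Hy.
set K := (c'.+1)%:R : R.
have HK : 0 < K by rewrite ltr0n.
set w := y / (64 * K).
have Hw : 0 <= w by apply: divr_ge0 => //; apply: mulr_ge0 => //; exact: ltW.
have Hyw : y = 64 * K * w by rewrite /w mulrC -mulrA mulVf ?mulr1 // mulf_neq0 // lt0r_neq0.
have H1 : w ^+ c' <= expR (c'%:R * w).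
  rewrite expRM_natl; apply: lerXn2r => //; rewrite ?qualifE /= ?expR_ge0 //.
  by apply: le_trans (expR_ge1Dx w); rewrite lerDr.
have H2 : expR (c'%:R * w) <= expR (y / 64).
  rewrite ler_expR Hyw.
  have : c'%:R <= K by rewrite /K ler_nat.
  move=> HcK.
  have -> : 64 * K * w / 64 = K * w by field.
  by apply: ler_wpM2r.
rewrite Hyw exprMn.
have -> : (64 * K * w) / 64 = K * w by field.
rewrite -mulrA; apply: ler_piMr; first by apply: exprn_ge0; apply: mulr_ge0; lra.
rewrite -[X in _ <= X](mulfV (lt0r_neq0 (expR_gt0 (K * w)))).
rewrite expRN; apply: ler_wpM2r; first by rewrite invr_ge0 expR_ge0.
apply: le_trans H1 _.
by move: H2; have -> : y / 64 = K * w by rewrite Hyw; field.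
Qed.


Lemma final_bound (eps L c : R) (c' : nat) : 0 < eps -> eps <= 1 -> 1 <= L ->
  128 * (c'.+1)%:R <= c -> c * eps ^- 2 * ln (eps^-1) <= L ->
  64 / eps ^+ 2 * expR (- (eps ^+ 2 / 32) * L) * L ^+ c' <= 64 * (64 * (c'.+1)%:R) ^+ c'.
Proof.
move=> He He1 HL Hc Hhyp.
set K := (c'.+1)%:R : R.
have HK : 1 <= K by rewrite /K ler1n.
have Hc0 : 0 < c by lra.
have He2 : 0 < eps ^+ 2 by apply: exprn_gt0.
set y := eps ^+ 2 * L.
have Hy : 0 <= y by apply: mulr_ge0; lra.
have Hln : ln (eps^-1) <= y / c.
  rewrite ler_pdivlMr //.
  have := ler_wpM2l (ltW He2) Hhyp.
  have -> : eps ^+ 2 * (c * eps ^- 2 * ln eps^-1) = ln eps^-1 * c.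
    by field; apply: lt0r_neq0.
  by [].
have Hinv : eps^-1 <= expR (y / c).
  rewrite -[X in X <= _](@lnK R); last by rewrite posrE invr_gt0.
  by rewrite ler_expR.
set z := expR (y / c).
have Hz : 0 <= z by exact: expR_ge0.
have Hinv2 : eps ^- 2 <= z ^+ 2.
  rewrite -exprVn; apply: lerXn2r => //; rewrite qualifE /= ?invr_ge0 //; lra.
have HLe : L = y * eps ^- 2 by rewrite /y; field; apply: lt0r_neq0.
have HLc : L ^+ c' <= y ^+ c' * z ^+ (2 * c').
  rewrite HLe exprMn exprM; apply: ler_wpM2l; first exact: exprn_ge0.
  apply: lerXn2r => //; rewrite ?qualifE /= ?exprn_ge0 //.
  by rewrite invr_ge0 exprn_ge0 // ltW.
have Hexp : - (eps ^+ 2 / 32) * L = - (y / 32) by rewrite /y; field.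
rewrite Hexp.
have Step1 : 64 / eps ^+ 2 * expR (- (y / 32)) * L ^+ c'
   <= 64 * z ^+ 2 * expR (- (y / 32)) * (y ^+ c' * z ^+ (2 * c')).
  apply: ler_pM; first by apply: mulr_ge0; [apply: divr_ge0 => //; exact: ltW | exact: expR_ge0].
  - by apply: exprn_ge0; lra.
  - apply: ler_wpM2r; first exact: expR_ge0.
    by rewrite ler_wpM2l //.
  - exact: HLc.
apply: le_trans Step1 _.
have Hzz : z ^+ 2 * z ^+ (2 * c') <= expR (y / 64).
  rewrite -exprD /z -expRM_natl ler_expR.
  rewrite ler_pdivlMr // mulrC mulrA.
  have : ((2 + 2 * c')%N)%:R * 64 <= c.
    rewrite natrD natrM.
    move: Hc; rewrite /K -addn1 natrD; lra.
  set N := ((2 + 2 * c')%N)%:R : R.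
  move=> H.
  have Hq : 64 * N / c <= 1 by rewrite ler_pdivrMr // mul1r mulrC.
  have -> : 64 * (N * y / c) = (64 * N / c) * y by field; apply: lt0r_neq0.
  by rewrite -[X in _ <= X]mul1r; apply: ler_wpM2r.
have := poly_exp y c' Hy.
rewrite -/K => Hp.
apply: (@le_trans _ _ (64 * (y ^+ c' * expR (- (y / 64))))); last first.
  by rewrite ler_wpM2l.
have -> : 64 * z ^+ 2 * expR (- (y / 32)) * (y ^+ c' * z ^+ (2 * c'))
   = 64 * y ^+ c' * ((z ^+ 2 * z ^+ (2 * c')) * expR (- (y / 32))) by ring.
rewrite -mulrA; apply: ler_wpM2l => //; apply: ler_wpM2l; first exact: exprn_ge0.
have -> : expR (- (y / 64)) = expR (y / 64) * expR (- (y / 32)).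
  by rewrite -expRD; congr expR; field.
by apply: ler_wpM2r => //; exact: expR_ge0.
Qed.

End Chern.

End ChernWrap.

Local Open Scope ring_scope.

Theorem mainTheorem9 (R : realType) :
  exists delta : R, 0 < delta /\
  forall c' : nat, exists c0 : R, forall c : R, c0 <= c ->
  exists C : R, 0 < C /\
  forall (n m a len : nat), (m < n)%N -> (a + len <= n)%N ->
    let eps : R := (n - m)%:R / n%:R in
    c * eps ^- 2 * ln (eps^-1) <= len%:R ->
    prob_hash R n m
      (fun h => delta * eps * len%:R <= (free_in (olp_build n h m) a len)%:R)
    >= 1 - C / len%:R ^+ c'.
Proof.
exists (1/2); split; first lra.
move=> c'; exists (128 * (c'.+1)%:R) => c Hc.
exists (64 * (64 * (c'.+1)%:R) ^+ c'); split.
  by apply: mulr_gt0; [lra | apply: exprn_gt0; rewrite mulr_gt0 // ltr0n].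
move=> n m a L Hmn HaL eps Hlen.
have Hn : (0 < n)%N by apply: leq_ltn_trans Hmn.
have Hn0 : 0 < n%:R :> R by rewrite ltr0n.
have Hnm : 0 < (n - m)%:R :> R by rewrite ltr0n subn_gt0.
have He : 0 < eps by apply: divr_gt0.
have He1 : eps <= 1.
  by rewrite /eps ler_pdivrMr // mul1r ler_nat leq_subr.
have Heps_n : eps * n%:R = (n - m)%:R by rewrite /eps mulfVK // lt0r_neq0.
have Hmn_R : m%:R / n%:R = 1 - eps :> R.
  rewrite /eps natrB; last exact: ltnW.
  rewrite mulrBl divff; last exact: lt0r_neq0.
  by rewrite opprB addrC subrK.
rewrite /prob_hash.
set A := [set f : {ffun 'I_m -> 'I_n} | _].
have Hcard : (#|A| + #|~: A| = n ^ m)%N by rewrite cardsC card_ffun !card_ord.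
have HN : 0 < (n ^ m)%:R :> R by rewrite ltr0n expn_gt0 Hn.
set C := 64 * (64 * (c'.+1)%:R) ^+ c'.
suff Hsuff : #|~: A|%:R / (n ^ m)%:R <= C / L%:R ^+ c'.
  have -> : #|A|%:R / (n ^ m)%:R = 1 - #|~: A|%:R / (n ^ m)%:R :> R.
    have E : #|A|%:R = (n ^ m)%:R - #|~: A|%:R :> R by rewrite -Hcard natrD addrK.
    by rewrite E mulrBl divff // lt0r_neq0.
  by rewrite lerD2l lerN2.
case: (posnP L) => HL0.
  have -> : #|~: A| = 0%N.
    apply/eqP; rewrite cards_eq0; apply/eqP/setP => f.
    by rewrite !inE HL0 mulr0 ler0n.
  rewrite mul0r; apply: divr_ge0; first by apply: mulr_ge0; [lra|apply: exprn_ge0; apply: mulr_ge0; [lra|exact: ler0n]].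
  exact: exprn_ge0 (ler0n _ _).
have HL1 : 1 <= L%:R :> R by rewrite ler1n.
pose s j := ((a + n - j) %% n)%N.
pose S j := [set y : 'I_n | ((y + n - s j) %% n < j + L)%N].
pose B j := [set f : {ffun 'I_m -> 'I_n} |
   (1 - eps / 2) * (j + L)%:R <= ((\sum_(i < m) (f i \in S j))%N)%:R].
have Hunion : (#|~: A| <= \sum_(j < n) #|B j|)%N.
  rewrite -sum1_card.
  apply: (@leq_trans (\sum_(f in ~: A) \sum_(j < n) (f \in B j))).
    apply: leq_sum => f; rewrite !inE => Hf.
    have Hinv := build_inv (h := hashfun f) Hn (ltnW Hmn) (fun k _ => hashfun_lt n m Hn f k).
    have [j [Hj Hcase]] := link Hn Hinv Hmn HL0 HaL.
    have HfB : f \in B j.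
      rewrite inE.
      move: Hf; rewrite -ltNge => Hf.
      case: Hcase => [[HjL Hle]|Hle].
      - rewrite Hc_sum in Hle.
        move: Hle; rewrite -(ler_nat R) !natrD => Hle.
        have Hj0 : 0 <= j%:R :> R by exact: ler0n.
        have Hej : 0 <= eps * j%:R by apply: mulr_ge0 => //; exact: ltW.
        nra.
      - exfalso.
        move: Hle; rewrite -(ler_nat R) natrD => Hle.
        have HLn : L%:R <= n%:R :> R by rewrite ler_nat; apply: leq_trans HaL; exact: leq_addl.
        have HeL : eps * L%:R <= eps * n%:R by apply: ler_wpM2l => //; exact: ltW.
        rewrite Heps_n natrB in HeL; last exact: ltnW.
        have Hmn' : m%:R < n%:R :> R by rewrite ltr_nat.
        have E : 1 / 2 * eps * L%:R = (eps * L%:R) / 2 by ring.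
        rewrite E in Hf.
        move: Hf Hle HeL Hmn'; set P := eps * L%:R; set F := (free_in _ a L)%:R.
        lra.
    rewrite (bigD1 (Ordinal Hj)) //= HfB.
    by [].
  apply: (@leq_trans (\sum_(f : {ffun 'I_m -> 'I_n}) \sum_(j < n) (f \in B j))).
    rewrite [X in (_ <= X)%N](bigID (fun f => f \in ~: A)) /=; exact: leq_addr.
  rewrite exchange_big /=; apply: leq_sum => j _.
  rewrite -sum1_card [X in (_ <= X)%N]big_mkcond /=.
  by apply: eq_leq; apply: eq_bigr => f _; case: (f \in B j).
have HB : forall j : nat, (j < n)%N ->
    #|B j|%:R <= (n ^ m)%:R * expR (- (eps ^+ 2 / 32) * (j%:R + L%:R)).
  move=> j Hj.
  have Hsj : (s j < n)%N by rewrite ltn_mod.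
  have Hth : 0 <= eps / 8 by apply: divr_ge0 => //; exact: ltW.
  have := tail_bound R n m (S j) (j + L) (eps / 8) ((1 - eps / 2) * (j + L)%:R) Hn Hth
            (card_S n Hn (s j) (j + L) Hsj).
  move=> H; apply: le_trans H _.
  apply: ler_wpM2l; first exact: ler0n.
  rewrite ler_expR Hmn_R natrD.
  apply: exponent_bound => //; first exact: ltW.
  by apply: addr_ge0; exact: ler0n.
have Hx : 0 < eps ^+ 2 / 32 by apply: divr_gt0 => //; apply: exprn_gt0.
have Hx1 : eps ^+ 2 / 32 <= 1.
  have : eps ^+ 2 <= 1 by rewrite expr_le1 //; exact: ltW.
  lra.
have Hsum : #|~: A|%:R <= (n ^ m)%:R * (2 / (eps ^+ 2 / 32) * expR (- (eps ^+ 2 / 32) * L%:R)).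
  apply: (@le_trans _ _ (\sum_(j < n) #|B j|%:R)).
    by rewrite -natr_sum ler_nat.
  apply: (@le_trans _ _ (\sum_(j < n) (n ^ m)%:R * expR (- (eps ^+ 2 / 32) * (j%:R + L%:R)))).
    by apply: ler_sum => j _; apply: HB.
  rewrite -mulr_sumr; apply: ler_wpM2l; first exact: ler0n.
  exact: geom_bound.
apply: (@le_trans _ _ (2 / (eps ^+ 2 / 32) * expR (- (eps ^+ 2 / 32) * L%:R))).
  by rewrite ler_pdivrMr // mulrC.
have -> : 2 / (eps ^+ 2 / 32) = 64 / eps ^+ 2 :> R.
  by field; exact: lt0r_neq0 He.
rewrite ler_pdivlMr; last by apply: exprn_gt0; lra.
rewrite /C; exact: (final_bound R eps L%:R c c' He He1 HL1 Hc Hlen).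
Qed.
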